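(* Let $i\ge 2$ be an integer and let $C(i)$, $B(i)$ be as defined in the context. (a) $C(i)$ is an $\mathbb{F}$-linear $[2i,2i-1,1]$-code which is $(2i-1)$-bounded relative to the ordered basis $B(i)$. (b) Let $j$ be an integer with $1\le j\le 4i^2-6i+1$. Then ${\sf Code}(B(i),j)$ is an $\mathbb{F}$-linear $[n_j,k_j,d_j]$-code which is $u_j$-bounded relative to the ordered basis ${\sf Basis}(B(i),j)$, where \[ n_j=2i\prod_{\ell=1}^{j}(2i-1+\ell),\quad k_j=2i-1+j,\quad d_j=\prod_{\ell=1}^{j}(2i-1+\ell),\quad u_j=(2i-1)\prod_{\ell=1}^{j}(2i-2+\ell). \]
   Context: $\mathbb{F}$ is an arbitrary field and vectors in $\mathbb{F}^n$ are column vectors. The weight $\mathrm{wt}(x)$ of $x\in\mathbb{F}^n$ is its number of nonzero coordinates. An $[n,k,d]$-code is a $k$-dimensional subspace of $\mathbb{F}^n$ whose minimum distance (the minimum weight of a nonzero codeword) is $d$. Boundedness: let $u$ be a positive integer and let $C$ be an $[n,k,d]$-code with ordered basis $B=(a_1,\dots,a_k)$. Then $C$ is $u$-bounded relative to $B$ if all three of the following hold: (i) $\mathrm{wt}(a_j)=u$ for every $j$; (ii) $\mathrm{wt}\big(\sum_{j=1}^k a_j\big)=d$; (iii) $u\ge d(1+k^{-1})$. Construction: for an ordered basis $B=(a_1,\dots,a_k)$ of a code $C\le\mathbb{F}^n$, set $a_0:=0\in\mathbb{F}^n$. For $m=1,\dots,k+1$, let $a'_m\in\mathbb{F}^{n(k+1)}$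 be the column vector made of $k+1$ blocks of length $n$. Its $r$-th block, for $r=1,\dots,k+1$, is $a_{r-m}$, where the subscript is read modulo $k+1$ with representatives in $\{0,\dots,k\}$. Thus $a'_1=(0,a_1,\dots,a_k)^T$, $a'_2=(a_k,0,a_1,\dots,a_{k-1})^T$, …, $a'_{k+1}=(a_1,\dots,a_k,0)^T$ in block form. Define ${\sf Basis}(B)=(a'_1,\dots,a'_{k+1})$, and let ${\sf Code}(B)\le\mathbb{F}^{n(k+1)}$ be its $\mathbb{F}$-linear span. Iteration: ${\sf Code}(B,1)={\sf Code}(B)$ and ${\sf Basis}(B,1)={\sf Basis}(B)$. For $i\ge2$, ${\sf Code}(B,i)={\sf Code}({\sf Basis}(B,i-1))$ and ${\sf Basis}(B,i)={\sf Basis}({\sf Basis}(B,i-1))$. Matrices: $\mathcal{A}_1=\begin{bmatrix}0&-1\\1&0\end{bmatrix}$ and $\mathcal{B}_1=\begin{bmatrix}1&-1\\-1&1\end{bmatrix}$. Recursively, for $i\ge1$, $\mathcal{A}_{i+1}=\begin{bmatrix}\mathcal{A}_1&\mathcal{B}_i\\-\mathcal{B}_i^T&\mathcal{A}_i\end{bmatrix}$ and $\mathcal{B}_{i+1}=[\mathcal{B}_1\ \mathcal{B}_i]$, as block matrices over $\mathbb{F}$. Thus $\mathcal{A}_i\in\mathbb{F}^{2i\times 2i}$. Codes $C(i)$: write $\mathcal{A}_i=[a_1,\dots,a_{2i}]$ by columns. Then $B(i)=(a_1,\dots,a_{2i-1})$, and $C(i)\le\mathbb{F}^{2i}$ is the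 $\mathbb{F}$-linear span of $B(i)$. The columns of $\mathcal{A}_i$ are linearly independent, so $B(i)$ is an ordered basis of $C(i)$. *)

(* Defs.v *)
(* Vectors of F^n are column vectors 'cV[F]_n; an ordered
   basis (a_1,...,a_k) of a code in F^n is stored as the matrix 'M[F]_(n,k)
   whose j-th column is a_{j+1}. *)
From HB Require Import structures.
From mathcomp Require Import all_boot all_order all_algebra.
Set Implicit Arguments. Unset Strict Implicit. Unset Printing Implicit Defensive.
Import GRing.Theory.
Local Open Scope ring_scope.

Section Codes.
Variable F : fieldType.

Definition wt n (v : 'cV[F]_n) : nat := #|[pred t : 'I_n | v t ord0 != 0]|.

Definition in_code n k (M : 'M[F]_(n, k)) (v : 'cV[F]_n) : Prop :=
  exists c : 'cV[F]_k, v = M *m c.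

Definition min_dist n k (M : 'M[F]_(n, k)) (d : nat) : Prop :=
  (exists v, [/\ in_code M v, v != 0 & wt v = d]) /\
  (forall v, in_code M v -> v != 0 -> (d <= wt v)%N).

Definition is_code a b (M : 'M[F]_(a, b)) (n k d : nat) : Prop :=
  [/\ a = n, \rank M = k & min_dist M d].

Definition bounded a b (M : 'M[F]_(a, b)) (u : nat) : Prop :=
  \rank M = b /\
  exists d, [/\ min_dist M d,
               (forall j : 'I_b, wt (col j M) = u),
               wt (\sum_(j < b) col j M) = d
             & (d * (b + 1) <= u * b)%N].
(* (iii) u >= d (1 + 1/k) is written u*k >= d*(k+1) (k = b >= 1 here) *)

(* entry (t,s) of M, 0 outside the range *)
Definition ent n k (M : 'M[F]_(n, k)) (t s : nat) : F :=
  match (insub t : option 'I_n), (insub s : option 'I_k) with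
  | Some t', Some s' => M t' s'
  | _, _ => 0
  end.

(* Basis(B): column m (0-based m', paper m = m'+1) has, in its block r
   (0-based r', paper r = r'+1, rows r'*n .. r'*n+n-1) the vector a_s with
   s = (r - m) mod (k+1), a_0 = 0, a_s = column s-1 of M. *)
Definition basis_mx n k (M : 'M[F]_(n, k)) : 'M[F]_(n * k.+1, k.+1) :=
  \matrix_(p, m)
    let r := (p %/ n)%N in
    let t := (p %% n)%N in
    match ((r + k.+1 - m) %% k.+1)%N with
    | 0 => 0
    | s.+1 => ent M t s
    end.

Definition cmat := {nk : nat * nat & 'M[F]_(nk.1, nk.2)}.

Definition basis_step (X : cmat) : cmat :=
  existT (fun nk : nat * nat => 'M[F]_(nk.1, nk.2))
    ((projT1 X).1 * (projT1 X).2.+1, (projT1 X).2.+1)%N (basis_mx (projT2 X)).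

Definition basis_iter (j : nat) (X : cmat) : cmat := iter j basis_step X.

(* The matrices A_i, B_i : Bm i = B_{i+1}, Am i = A_{i+1} *)
Definition A1 : 'M[F]_(2 * 1) :=
  \matrix_(r, c) (if (r == c :> nat) then 0 else if (r == 0%N :> nat) then -1 else 1).
Definition B1 : 'M[F]_(2, 2 * 1) :=
  \matrix_(r, c) (if (r == c :> nat) then 1 else -1).

Lemma dimS i : (2 * 1 + 2 * i.+1 = 2 * i.+2)%N.
Proof. by rewrite !mulnS. Qed.

Fixpoint Bm (i : nat) : 'M[F]_(2, 2 * i.+1) :=
  match i with
  | 0 => B1
  | i'.+1 => castmx (erefl, dimS i') (row_mx B1 (Bm i'))
  end.

Fixpoint Am (i : nat) : 'M[F]_(2 * i.+1) :=
  match i with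
  | 0 => A1
  | i'.+1 => castmx (dimS i', dimS i')
               (block_mx A1 (Bm i') (- (Bm i')^T) (Am i'))
  end.

(* A_i for i >= 1 (A_0 is the empty matrix, never used) *)
Definition Amat (i : nat) : 'M[F]_(2 * i) :=
  match i return 'M[F]_(2 * i) with
  | 0 => 0
  | i'.+1 => Am i'
  end.

Definition Cbasis (i : nat) : 'M[F]_(2 * i, (2 * i).-1) :=
  \matrix_(r, c) Amat i r (widen_ord (leq_pred (2 * i)) c).

Definition Cmat (i : nat) : cmat :=
  existT (fun nk : nat * nat => 'M[F]_(nk.1, nk.2)) (2 * i, (2 * i).-1)%N
    (Cbasis i).

End Codes.

(* Main.v *)
Require Import Defs.
From HB Require Import structures.
From mathcomp Require Import all_boot all_order all_algebra.
From mathcomp Require Import zify ring.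

Module M_P1.
Set Implicit Arguments. Unset Strict Implicit. Unset Printing Implicit Defensive.
Import GRing.Theory.
Local Open Scope ring_scope.

Section Ent.
Variable F : fieldType.

Lemma row_natE m n1 n2 (A : 'M[F]_(m,n1)) (B : 'M[F]_(m,n2)) (f : nat -> nat -> F) :
  (forall (r : 'I_m) (c : 'I_n1), A r c = f r c) ->
  (forall (r : 'I_m) (c : 'I_n2), B r c = f r (n1 + c)%N) ->
  forall r c, row_mx A B r c = f r c.
Proof.
move=> hA hB r c; rewrite /row_mx mxE; case: splitP => [k ->|k ->]; by [rewrite hA|rewrite hB].
Qed.

Lemma block_natE m1 m2 n1 n2 (A : 'M[F]_(m1,n1)) (B : 'M[F]_(m1,n2))
  (C : 'M[F]_(m2,n1)) (D : 'M[F]_(m2,n2)) (f : nat -> nat -> F) :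
  (forall (r : 'I_m1) (c : 'I_n1), A r c = f r c) ->
  (forall (r : 'I_m1) (c : 'I_n2), B r c = f r (n1 + c)%N) ->
  (forall (r : 'I_m2) (c : 'I_n1), C r c = f (m1 + r)%N c) ->
  (forall (r : 'I_m2) (c : 'I_n2), D r c = f (m1 + r)%N (n1 + c)%N) ->
  forall r c, block_mx A B C D r c = f r c.
Proof.
move=> hA hB hC hD r c; rewrite /block_mx /col_mx mxE; case: splitP => [k ->|k ->].
  exact: (@row_natE _ _ _ A B f hA hB k c).
have := (@row_natE _ _ _ C D (fun r c => f (m1 + r)%N c)); apply => // ? ?; rewrite ?hC ?hD.
Qed.

Definition gB (r c : nat) : F := if odd r == odd c then 1 else -1.

Definition g (r c : nat) : F :=
  if r./2 == c./2 then (if r == c then 0 else if odd r then 1 else -1)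
  else if (r./2 < c./2)%N then gB r c else - gB r c.

Lemma gBr r c : gB r (2 * 1 + c) = gB r c.
Proof. by rewrite /gB oddD /=; case: (odd c). Qed.

Lemma oddS2 r : odd (2 * 1 + r) = odd r.
Proof. by rewrite oddD /=; case: (odd r). Qed.
Lemma gBl r c : gB (2 * 1 + r) c = gB r c.
Proof. by rewrite /gB oddS2. Qed.
Lemma half2 r : (2 * 1 + r)./2 = (r./2).+1.
Proof. by []. Qed.

Lemma BmE k (r : 'I_2) (c : 'I_(2 * k.+1)) : Bm F k r c = gB r c.
Proof.
elim: k r c => [|k IH] r c.
  rewrite /Bm /B1 mxE /gB; case: r c => [[|[|]]] // _ [[|[|]]] //.
rewrite /= castmxE /=; apply: row_natE => r' c'.
  rewrite /B1 mxE /gB; case: r' c' => [[|[|]]] // _ [[|[|]]] //.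
by rewrite IH /gB /= !oddD /= negbK.
Qed.

Lemma AmE k (r c : 'I_(2 * k.+1)) : Am F k r c = g r c.
Proof.
elim: k r c => [|k IH] r c.
  rewrite /Am /A1 mxE /g; case: r c => [[|[|]]] // _ [[|[|]]] //.
rewrite /= castmxE /=; apply: block_natE => r' c'.
- rewrite /A1 mxE /g; case: r' c' => [[|[|]]] // _ [[|[|]]] //.
- by rewrite BmE /g; case: r' c' => [[|[|]]] // _ c' /=; rewrite gBr.
- rewrite !mxE BmE /g; case: c' r' => [[|[|]]] // _ r' /=;
  by rewrite /gB !oddD /=; case: (odd r').
- rewrite IH /g gBr gBl oddS2 eqn_add2l !half2 eqSS ltnS //.
Qed.
End Ent.

End M_P1.
Import M_P1.

Module M_P2.
Set Implicit Arguments. Unset Strict Implicit. Unset Printing Implicit Defensive.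
Import GRing.Theory.
Local Open Scope ring_scope.

Section Gen.
Variable F : fieldType.

Lemma entE a b (M : 'M[F]_(a, b)) (x : 'I_a) (y : 'I_b) : ent M x y = M x y.
Proof.
rewrite /ent; case: insubP => [x' _ ex|]; last by rewrite ltn_ord.
case: insubP => [y' _ ey|]; last by rewrite ltn_ord.
by congr (M _ _); apply: val_inj.
Qed.

Lemma wt_sum N (v : 'cV[F]_N) : wt v = (\sum_(0 <= p < N) (ent v p 0 != 0%R))%N.
Proof.
rewrite big_mkord /wt -sum1_card big_mkcond /=; apply: eq_bigr => t _.
by rewrite inE (entE v t ord0); case: (v t ord0 != 0).
Qed.

Lemma sum_blocks n K (G : nat -> nat) :
  (\sum_(0 <= p < n * K) G p = \sum_(0 <= r < K) \sum_(0 <= t < n) G (r * n + t))%N.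
Proof.
elim: K => [|K IH]; first by rewrite muln0 !big_geq.
rewrite big_nat_recr //= -IH (big_cat_nat _ (n := n * K)) ?leq_mul2l ?leqnSn ?orbT //=.
congr (_ + _)%N.
rewrite -{1}[(n * K)%N]add0n big_addn mulnS addnK.
by apply: eq_bigr => t _; rewrite addnC mulnC.
Qed.

Lemma wt0 N (v : 'cV[F]_N) : wt v = 0%N -> v = 0.
Proof.
move=> h; apply/matrixP => x y; rewrite (ord1 y) mxE.
have := card0_eq h x; rewrite !inE /=. by move/negbT; rewrite negbK => /eqP.
Qed.
End Gen.

End M_P2.
Import M_P2.

Module M_P3.
Set Implicit Arguments. Unset Strict Implicit. Unset Printing Implicit Defensive.
Import GRing.Theory.
Lemma bump0 j : bump 0 j = j.+1. Proof. by []. Qed.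
Local Open Scope ring_scope.

Definition phi (K r s : nat) : nat := if (s <= r)%N then (r - s)%N else (r + K - s)%N.

Lemma phi_mod K r s : (r < K)%N -> (s < K)%N -> ((r + K - s) %% K)%N = phi K r s.
Proof.
move=> hr hs; rewrite /phi; case: (leqP s r) => h.
  have -> : (r + K - s = (r - s) + K)%N by lia.
  by rewrite modnDr modn_small //; lia.
by rewrite modn_small //; lia.
Qed.

Lemma phi_lt K r s : (r < K)%N -> (s < K)%N -> (phi K r s < K)%N.
Proof. by move=> hr hs; rewrite /phi; case: (leqP s r) => h; lia. Qed.

Lemma phiK K r s : (r < K)%N -> (s < K)%N -> phi K r (phi K r s) = s.
Proof. move=> hr hs; rewrite /phi; case: (leqP s r) => h; case: leqP => h'; lia. Qed.

Lemma phi_eq0 K r s : (r < K)%N -> (s < K)%N -> (phi K r s == 0%N) = (s == r).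
Proof. move=> hr hs; rewrite /phi; case: (leqP s r) => h; apply/eqP/eqP; lia. Qed.

Lemma phi_mod2 K r s : (r < K)%N -> (s < K)%N -> ((r + K - phi K r s) %% K)%N = s.
Proof. by move=> hr hs; rewrite phi_mod ?phiK ?phi_lt. Qed.

Definition indep (F : fieldType) a b (A : 'M[F]_(a, b)) := forall c : 'cV_b, A *m c = 0 -> c = 0.

Definition good (F : fieldType) a b (A : 'M[F]_(a, b)) d u :=
  [/\ (0 < a)%N, (0 < b)%N, indep A, min_dist A d &
      (forall j, wt (col j A) = u) /\ wt (\sum_j col j A) = d].

Lemma sumcolE (F : fieldType) a b (A : 'M[F]_(a, b)) :
  \sum_j col j A = A *m const_mx 1.
Proof.
apply/matrixP => x y; rewrite summxE !mxE; apply: eq_bigr => j _.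
by rewrite !mxE mulr1.
Qed.

Lemma wtZ (F : fieldType) a (w : 'cV[F]_a) (x : F) : x != 0 -> wt (x *: w) = wt w.
Proof.
move=> hx; apply: eq_card => t; rewrite !inE mxE mulf_eq0 negb_or hx //.
Qed.

Lemma wt_gt0 (F : fieldType) a (w : 'cV[F]_a) : w != 0 -> (0 < wt w)%N.
Proof. by move=> hw; rewrite lt0n; apply: contra hw => /eqP /wt0 ->. Qed.

Lemma phi_eqE K r a b : (r < K)%N -> (a < K)%N -> (b < K)%N ->
  (phi K r a == phi K r b) = (a == b).
Proof.
move=> hr ha hb; apply/eqP/eqP => [h|->] //.
by rewrite -(phiK hr ha) h phiK.
Qed.

Section Basis.
Variable F : fieldType.
Variables (n k : nat) (M : 'M[F]_(n, k)).
Hypothesis n0 : (0 < n)%N.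

Definition crot (r : nat) (c : 'cV[F]_k.+1) : 'cV[F]_k :=
  \col_(j < k) ent c (phi k.+1 r j.+1) 0.

Lemma block_code (c : 'cV[F]_k.+1) (p : 'I_(n * k.+1)) :
  (basis_mx M *m c) p 0 = ent (M *m crot (p %/ n) c) (p %% n) 0.
Proof.
have hr : (p %/ n < k.+1)%N by rewrite ltn_divLR //; have := ltn_ord p; lia.
have ht : (p %% n < n)%N by rewrite ltn_pmod.
rewrite (entE _ (Ordinal ht) ord0) !mxE.
pose h := fun s : 'I_k.+1 => (inord (phi k.+1 (p %/ n) s) : 'I_k.+1).
have hK : cancel h h.
  move=> s; apply: val_inj; rewrite /h /= !inordK ?phiK ?phi_lt //.
rewrite (reindex_inj (can_inj hK)) /= big_ord_recl.
rewrite mxE /h inordK ?phi_lt // phi_mod2 // mul0r add0r.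
apply: eq_bigr => j _; rewrite !mxE /= bump0 inordK ?phi_lt ?ltnS //; rewrite phi_mod2 ?ltnS //.
by rewrite -(entE c _ ord0) -(entE M (Ordinal ht) j) /= inordK ?phi_lt ?ltnS.
Qed.

Lemma block_code' (c : 'cV[F]_k.+1) r (t : 'I_n) : (r < k.+1)%N ->
  (M *m crot r c) t 0 = ent (basis_mx M *m c) (r * n + t) 0.
Proof.
move=> hr; have hp : (r * n + t < n * k.+1)%N.
  have := ltn_ord t; rewrite mulnC; nia.
rewrite (entE _ (Ordinal hp) ord0) block_code /=.
rewrite divnMDl // modnMDl divn_small // modn_small // addn0.
by rewrite (entE _ t ord0).
Qed.

Lemma wt_code (c : 'cV[F]_k.+1) :
  wt (basis_mx M *m c) = (\sum_(0 <= r < k.+1) wt (M *m crot r c))%N.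
Proof.
rewrite wt_sum sum_blocks; apply: eq_big_nat => r hr; rewrite wt_sum big_mkord.
rewrite [in RHS]big_mkord; apply: eq_bigr => t _.
by rewrite (entE _ t ord0) block_code'.
Qed.

Lemma crot_ent (c : 'cV[F]_k.+1) (r : nat) (m : 'I_k.+1) : (r < k.+1)%N -> r != m ->
  exists j : 'I_k, crot r c j 0 = c m 0.
Proof.
move=> hr hm.
have h0 : phi k.+1 r m != 0%N by rewrite phi_eq0 // eq_sym.
have hs : ((phi k.+1 r m).-1 < k)%N.
  have := phi_lt hr (ltn_ord m); lia.
exists (Ordinal hs); rewrite mxE /=.
have -> : (phi k.+1 r m).-1.+1 = phi k.+1 r m.
  lia.
by rewrite phiK // (entE _ m ord0).
Qed.


Lemma crot_delta (r : nat) (m : 'I_k.+1) (j : 'I_k) : (r < k.+1)%N ->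
  crot r (delta_mx m 0) j 0 = ((j.+1 == phi k.+1 r m) %:R).
Proof.
move=> hr; have hl : (phi k.+1 r j.+1 < k.+1)%N by apply: phi_lt; rewrite // ltnS.
rewrite mxE (entE _ (Ordinal hl) ord0) !mxE /= eqxx andbT.
have h1 : (j.+1 < k.+1)%N := ltn_ord j. have h2 := phi_lt hr (ltn_ord m).
by rewrite -(inj_eq val_inj) /= -{1}(phiK hr (ltn_ord m)) phi_eqE.
Qed.

Lemma crot_delta_eq (m : 'I_k.+1) : crot m (delta_mx m 0) = 0.
Proof.
apply/matrixP => j y; rewrite (ord1 y) crot_delta // !mxE.
by have -> : phi k.+1 m m = 0%N by rewrite /phi leqnn subnn.
Qed.

Lemma crot_delta_neq (r : nat) (m : 'I_k.+1) : (r < k.+1)%N -> r != m ->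
  exists j0 : 'I_k, crot r (delta_mx m 0) = delta_mx j0 0.
Proof.
move=> hr hm.
have h0 : phi k.+1 r m != 0%N by rewrite phi_eq0 // eq_sym.
have hs : ((phi k.+1 r m).-1 < k)%N by have := phi_lt hr (ltn_ord m); lia.
exists (Ordinal hs); apply/matrixP => j y; rewrite (ord1 y) crot_delta // !mxE /= eqxx andbT.
by rewrite -(inj_eq val_inj) /=; congr (_ %:R); apply/eqP/eqP; lia.
Qed.

Lemma ent0 a b x y : ent (0 : 'M[F]_(a, b)) x y = 0.
Proof. by rewrite /ent; case: insub => [?|] //; case: insub => [?|] //; rewrite mxE. Qed.

Lemma sum_if_neq K (m : 'I_K) u :
  (\sum_(0 <= r < K) (if r == m then 0 else u) = K.-1 * u)%N.
Proof.
rewrite big_mkord (bigD1 m) //= eqxx add0n.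
rewrite (eq_bigr (fun _ => u)); last by move=> r hr; case: eqP => // h; case/eqP: hr; apply: val_inj.
by rewrite sum_nat_const cardC1 card_ord.
Qed.

Lemma wt_zero a : wt (0 : 'cV[F]_a) = 0%N.
Proof. by apply: eq_card0 => t; rewrite !inE mxE eqxx. Qed.

Lemma step d u : good M d u -> (d * k.+1 <= u * k)%N ->
  good (basis_mx M) (d * k.+1) (k * u).
Proof.
case=> _ hk hind [[v0 [[c0 ->] hv0 hwv0] hmin]] [hcol hsum] hiii.
have hd : (0 < d)%N by rewrite -hwv0 wt_gt0.
have hcolN : forall m : 'I_k.+1, wt (col m (basis_mx M)) = (k * u)%N.
  move=> m; rewrite colE wt_code.
  rewrite (eq_big_nat _ _ (F2 := fun r => if r == m then 0%N else u)); last first.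
    move=> r /andP [_ hr]; case: eqP => [->|/eqP hrm].
      by rewrite crot_delta_eq mulmx0 wt_zero.
    by have [j0 ->] := crot_delta_neq hr hrm; rewrite -colE hcol.
  by rewrite sum_if_neq.
have hsumN : wt (\sum_j col j (basis_mx M)) = (d * k.+1)%N.
  rewrite sumcolE wt_code.
  rewrite (eq_big_nat _ _ (F2 := fun r => d)); last first.
    move=> r /andP [_ hr]; rewrite -hsum sumcolE; congr (wt (M *m _)).
    apply/matrixP => j y; rewrite !mxE.
    have hl : (phi k.+1 r j.+1 < k.+1)%N by apply: phi_lt; rewrite // ltnS.
    by rewrite (entE (const_mx 1 : 'cV[F]_k.+1) (Ordinal hl) ord0) mxE.
  by rewrite sum_nat_const_nat subn0 mulnC.
have hindN : indep (basis_mx M).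
  move=> c hc; apply/matrixP => m y; rewrite (ord1 y) mxE.
  pose r := if m == 0%N :> nat then 1%N else 0%N.
  have hr : (r < k.+1)%N by rewrite /r; case: eqP; lia.
  have hrm : r != m by rewrite /r; case: (_ =P 0%N) => h; lia.
  have [j hj] := crot_ent c hr hrm; rewrite -hj.
  suff -> : crot r c = 0 by rewrite mxE.
  apply: hind; apply/matrixP => t y'; rewrite (ord1 y') block_code' // mxE.
  by rewrite hc ent0.
split => //; first by rewrite muln_gt0 n0.
split.
  exists (\sum_j col j (basis_mx M)); split => //.
  - by exists (const_mx 1); rewrite sumcolE.
  - by apply/eqP => h; move: hsumN; rewrite h wt_zero; move/eqP; rewrite eq_sym muln_eq0; lia.
move=> _ [c ->] hv.
case: (boolP [exists r : 'I_k.+1, crot r c == 0]) => [/existsP [r0 /eqP hr0] | hnone].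
  have hz : forall m : 'I_k.+1, m != r0 -> c m 0 = 0.
    move=> m hm; have hm' : (r0 != m :> nat) by rewrite eq_sym.
    by have [j <-] := crot_ent c (ltn_ord r0) hm'; rewrite hr0 mxE.
  have hE : basis_mx M *m c = c r0 0 *: col r0 (basis_mx M).
    apply/matrixP => p y; rewrite (ord1 y) !mxE (bigD1 r0) //= big1 ?addr0.
      by rewrite !mxE mulrC.
    by move=> m hm; rewrite (hz m hm) mulr0.
  have hc0 : c r0 0 != 0.
    apply: contra hv => /eqP h; rewrite hE h scale0r //.
  by rewrite hE wtZ // hcolN (mulnC k).
have hall : forall r : 'I_k.+1, crot r c != 0.
  by move=> r; apply/negP => h; move/negP: hnone; apply; apply/existsP; exists r.
rewrite wt_code mulnC -{1}[k.+1]subn0 -sum_nat_const_nat !big_mkord.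
apply: leq_sum => r _; apply: hmin; first by exists (crot r c).
by apply: contra (hall r) => /eqP /hind ->.
Qed.
End Basis.

End M_P3.
Import M_P3.

Module M_P4.
Set Implicit Arguments. Unset Strict Implicit. Unset Printing Implicit Defensive.
Import GRing.Theory.
Local Open Scope ring_scope.

Section CB.
Variable F : fieldType.

Definition G (a : nat) (x : bool) (b : nat) (y : bool) : F :=
  if a == b then (if x == y then 0 else if x then 1 else -1)
  else if (a < b)%N then (if x == y then 1 else -1) else (if x == y then -1 else 1).

Lemma gE a (x : bool) b (y : bool) : g F (x + a.*2) (y + b.*2) = G a x b y.
Proof.
rewrite /g /G !half_bit_double !oddD !odd_double !addbF /gB !oddD !odd_double !addbF.
case: (a =P b) => [->|hab] //.
  have -> : (x + b.*2 == y + b.*2)%N = (x == y) by rewrite eqn_add2r; case: x; case: y.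
  by case: x; case: y.
by case: (a < b)%N; case: x; case: y => //=; rewrite opprK.
Qed.

Lemma colpair a (x : bool) b :
  g F (x + a.*2) b.*2 + g F (x + a.*2) b.*2.+1 = if a == b then (if x then 1 else -1) else 0.
Proof.
have := gE a x b false; have := gE a x b true; rewrite add1n add0n => -> ->.
rewrite /G; case: (a == b); case: (a < b)%N; case: x => /=;
  by rewrite ?addr0 ?add0r ?subrr ?addNr.
Qed.

Lemma rowpair a b (y : bool) :
  g F a.*2 (y + b.*2) + g F a.*2.+1 (y + b.*2) = if a == b then (if y then -1 else 1) else 0.
Proof.
have := gE a false b y; have := gE a true b y; rewrite add1n add0n => -> ->.
rewrite /G; case: (a == b); case: (a < b)%N; case: y => /=;
  by rewrite ?addr0 ?add0r ?subrr ?addNr.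
Qed.

Lemma sum_pairs N (f : nat -> F) :
  \sum_(0 <= c < N.*2) f c = \sum_(0 <= b < N) (f b.*2 + f b.*2.+1).
Proof.
elim: N => [|N IH]; first by rewrite !big_geq.
by rewrite doubleS !big_nat_recr //= IH addrA.
Qed.

Lemma sum_delta N a (f : nat -> F) : (a < N)%N ->
  \sum_(0 <= b < N) (if a == b then f b else 0) = f a.
Proof.
move=> ha; rewrite big_mkord (bigD1 (Ordinal ha)) //= eqxx big1 ?addr0 //.
move=> j hj; case: eqP => // h; case/eqP: hj; exact: val_inj.
Qed.

Lemma rowsum N r : (r < N.*2)%N ->
  \sum_(0 <= c < N.*2) g F r c = if odd r then 1 else -1.
Proof.
move=> hr; rewrite -{1}(odd_double_half r) sum_pairs.
transitivity (\sum_(0 <= b < N) (if r./2 == b then (if odd r then 1 else -1) else 0 : F)).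
  by apply: eq_big_nat => b _; rewrite colpair.
by rewrite sum_delta // ltn_half_double.
Qed.

Lemma natP r : exists (x : bool) a, r = (x + a.*2)%N.
Proof. by exists (odd r), r./2; rewrite odd_double_half. Qed.

Lemma g_eq0 r c : (g F r c == 0) = (r == c).
Proof.
rewrite /g /gB; case: (r =P c) => [->|h]; first by rewrite !eqxx.
by case: ifP => _; [case: ifP => _ | case: ifP => _; case: ifP => _];
  rewrite ?oppr_eq0 ?oner_eq0.
Qed.

Lemma g_last N r : (0 < N)%N -> (r < N.*2)%N ->
  g F r N.*2.-1 = if r == N.*2.-1 then 0 else if odd r then 1 else -1.
Proof.
move=> hN hr; have [x [a er]] := natP r; subst r.
have -> : N.*2.-1 = (true + (N.-1).*2)%N by lia.
rewrite gE /G oddD odd_double addbF.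
have -> : (x + a.*2 == true + (N.-1).*2)%N = (a == N.-1) && x.
  by clear hr; case: x; apply/eqP/andP; (try case); lia.
case: (a =P N.-1) => [e|h] /=; first by clear hr; case: x.
have -> : (a < N.-1)%N by lia.
by clear hr; case: x.
Qed.

Lemma rowsum' N r : (0 < N)%N -> (r < N.*2)%N ->
  \sum_(0 <= c < N.*2.-1) g F r c = (r == N.*2.-1)%:R.
Proof.
move=> hN hr.
have h := rowsum hr; rewrite -{1}[N.*2](@prednK _) in h; last by lia.
rewrite big_nat_recr //= in h.
apply: (addIr (g F r N.*2.-1)); rewrite h g_last //.
case: (r =P N.*2.-1) => [->|_] /=; last by rewrite add0r.
have -> : odd N.*2.-1 by have [x [a e]] := natP N.*2.-1; rewrite e oddD odd_double addbF; move: e; case: x => //=; lia.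
by rewrite addr0.
Qed.
End CB.

End M_P4.
Import M_P4.

Module M_P5.
Set Implicit Arguments. Unset Strict Implicit. Unset Printing Implicit Defensive.
Import GRing.Theory.
Local Open Scope ring_scope.

Section CB2.
Variable F : fieldType.

Lemma CE i (r : 'I_(2 * i)) (c : 'I_(2 * i).-1) : Cbasis F i r c = g F r c.
Proof.
rewrite /Cbasis mxE; case: i r c => [|i] r c; first by case: r => ? hr; exfalso; move: hr; rewrite muln0.
by rewrite /= AmE.
Qed.

Lemma ent_out a b (M : 'M[F]_(a, b)) x y : (a <= x)%N -> ent M x y = 0.
Proof. by move=> h; rewrite /ent; case: insubP => // x' hx ex; move: hx; rewrite ltnNge h. Qed.

Lemma CmulE i (v : 'cV[F]_(2 * i).-1) (r : 'I_(2 * i)) :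
  (Cbasis F i *m v) r 0 = \sum_(0 <= c < (2 * i).-1) g F r c * ent v c 0.
Proof.
rewrite mxE big_mkord; apply: eq_bigr => c _.
by rewrite CE (entE v c 0).
Qed.

Lemma CmulE2 i (v : 'cV[F]_(2 * i).-1) (r : 'I_(2 * i)) : (0 < i)%N ->
  (Cbasis F i *m v) r 0 = \sum_(0 <= c < i.*2) g F r c * ent v c 0.
Proof.
move=> hi; rewrite CmulE.
have -> : i.*2 = ((2 * i).-1).+1 by lia.
by rewrite big_nat_recr //= ent_out // mulr0 addr0.
Qed.

Lemma rowpair0 a b : g F a.*2 b.*2 + g F a.*2.+1 b.*2 = if a == b then 1 else 0.
Proof. by have := rowpair F a b false; rewrite add0n. Qed.
Lemma rowpair1 a b : g F a.*2 b.*2.+1 + g F a.*2.+1 b.*2.+1 = if a == b then -1 else 0.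
Proof. by have := rowpair F a b true; rewrite add1n. Qed.
Lemma colpair0 a b : g F a.*2 b.*2 + g F a.*2 b.*2.+1 = if a == b then -1 else 0.
Proof. by have := colpair F a false b; rewrite add0n. Qed.

Lemma C_indep i : (0 < i)%N -> indep (Cbasis F i).
Proof.
move=> hi v hv.
pose y := fun c => ent v c 0.
have hrow : forall r, (r < i.*2)%N -> \sum_(0 <= c < i.*2) g F r c * y c = 0.
  move=> r hr; have hr' : (r < 2 * i)%N by rewrite mul2n.
  by have := CmulE2 v (Ordinal hr') hi; rewrite hv mxE /= => <-.
have hpair : forall a, (a < i)%N -> y a.*2 = y a.*2.+1.
  move=> a ha.
  have h1 := hrow a.*2 ltac:(lia); have h2 := hrow a.*2.+1 ltac:(lia).
  have e : \sum_(0 <= c < i.*2) (g F a.*2 c + g F a.*2.+1 c) * y c = 0.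
    by rewrite (eq_bigr (fun c => g F a.*2 c * y c + g F a.*2.+1 c * y c));
      [rewrite big_split /= h1 h2 addr0 | move=> c _; rewrite mulrDl].
  rewrite sum_pairs in e.
  have e2 : \sum_(0 <= b < i) (if a == b then y b.*2 - y b.*2.+1 else 0) = 0.
    rewrite -[X in _ = X]e; apply: eq_big_nat => b _; rewrite rowpair0 rowpair1.
    by case: eqP => _; rewrite ?mul1r ?mulN1r ?mul0r ?addr0.
  by rewrite sum_delta // in e2; apply/eqP; rewrite -subr_eq0 e2.
have hev : forall a, (a < i)%N -> y a.*2 = 0.
  move=> a ha; have := hrow a.*2 ltac:(lia); rewrite sum_pairs.
  rewrite (eq_big_nat _ _ (F2 := fun b => if a == b then - y b.*2 else 0)).
    by rewrite sum_delta // => /eqP; rewrite oppr_eq0 => /eqP.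
  move=> b /andP [_ hb]; rewrite -(hpair b hb) -mulrDl colpair0.
  by case: eqP => _; rewrite ?mulN1r ?mul1r ?mul0r.
apply/matrixP => c z; rewrite (ord1 z) mxE -(entE v c 0) -/(y c).
have hc : (c < i.*2)%N by have := ltn_ord c; lia.
have [x [a e]] := natP c; rewrite e; rewrite e in hc.
have ha : (a < i)%N by lia.
by clear e hc; case: x => /=; rewrite ?add1n ?add0n -?hpair // hev.
Qed.

Lemma rowsum2 i r : (0 < i)%N -> (r < 2 * i)%N ->
  \sum_(0 <= c < (2 * i).-1) g F r c = (r == (2 * i).-1)%:R.
Proof. by move=> hi hr; rewrite mul2n; apply: rowsum'; rewrite // -mul2n. Qed.

Lemma C_good i : (0 < i)%N -> good (Cbasis F i) 1 (2 * i - 1).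
Proof.
move=> hi.
have hsum : wt (\sum_j col j (Cbasis F i)) = 1%N.
  have hl : ((2 * i).-1 < 2 * i)%N by lia.
  rewrite /wt; apply: (etrans _ (card1 (Ordinal hl))); apply: eq_card => t; rewrite !inE summxE.
  rewrite (eq_bigr (fun c : 'I_(2 * i).-1 => g F t c)); last by move=> c _; rewrite mxE CE.
  rewrite -(big_mkord xpredT (fun c => g F t c)) rowsum2 //.
  by rewrite -(inj_eq val_inj) /=; case: (_ == (2 * i).-1)%N; rewrite ?oner_eq0 ?eqxx.
split => //; first by lia.
- by lia.
- exact: C_indep.
- split; last by move=> v _ /wt_gt0.
  exists (\sum_j col j (Cbasis F i)); split => //.
    by exists (const_mx 1); rewrite sumcolE.
  by apply/eqP => h; move: hsum; rewrite h wt_zero.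
split => // j.
have -> : (2 * i - 1 = #|'I_(2 * i)|.-1)%N by rewrite card_ord; lia.
rewrite /wt -(cardC1 (widen_ord (leq_pred _) j)); apply: eq_card => t.
by rewrite !inE mxE CE g_eq0.
Qed.
End CB2.

End M_P5.
Import M_P5.

Module M_P6.
Set Implicit Arguments. Unset Strict Implicit. Unset Printing Implicit Defensive.
Import GRing.Theory.
Local Open Scope ring_scope.

Lemma indep_rank (F : fieldType) a b (A : 'M[F]_(a, b)) : indep A -> \rank A = b.
Proof.
move=> hA; rewrite -mxrank_tr; apply/eqP; change (row_free A^T); rewrite -kermx_eq0.
set K := kermx A^T.
have hK : K *m A^T = 0 by apply/eqP; rewrite -sub_kermx submx_refl.
apply/eqP/row_matrixP => s; rewrite row0.
have : row s K *m A^T = 0 by rewrite -row_mul hK row0.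
move/(congr1 trmx); rewrite trmx_mul trmxK trmx0 => /hA h.
by rewrite -[row s K]trmxK h trmx0.
Qed.

Definition Pp i j := (\prod_(1 <= l < j.+1) (2 * i - 1 + l))%N.
Definition Qp i j := (\prod_(1 <= l < j.+1) (2 * i - 2 + l))%N.

Lemma Pp0 i : Pp i 0 = 1%N. Proof. by rewrite /Pp big_geq. Qed.
Lemma Qp0 i : Qp i 0 = 1%N. Proof. by rewrite /Qp big_geq. Qed.
Lemma PpS i j : Pp i j.+1 = (Pp i j * (2 * i - 1 + j.+1))%N.
Proof. by rewrite /Pp big_nat_recr. Qed.
Lemma QpS i j : Qp i j.+1 = (Qp i j * (2 * i - 2 + j.+1))%N.
Proof. by rewrite /Qp big_nat_recr. Qed.

Lemma QP i j : (0 < i)%N -> (Qp i j * (2 * i - 1 + j) = (2 * i - 1) * Pp i j)%N.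
Proof.
move=> hi; elim: j => [|j IH]; first by rewrite Qp0 Pp0; lia.
rewrite QpS PpS.
have -> : (2 * i - 2 + j.+1 = 2 * i - 1 + j)%N by lia.
by rewrite IH mulnA.
Qed.

Lemma ineq i j : (2 <= i)%N -> (j <= 4 * i ^ 2 - 6 * i + 1)%N ->
  (Pp i j * (2 * i - 1 + j).+1 <= (2 * i - 1) * Qp i j * (2 * i - 1 + j))%N.
Proof.
move=> hi hj; rewrite -mulnA QP; last by lia.
rewrite mulnA [(_ * (2 * i - 1 + j).+1)%N]mulnC.
apply: leq_mul => //.
have : (4 * i ^ 2 = 4 * i * i)%N by rewrite expnS expn1 mulnA.
nia.
Qed.

Lemma iter_good (F : fieldType) i j : (2 <= i)%N -> (j <= 4 * i ^ 2 - 6 * i + 1)%N ->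
  let X := basis_iter j (Cmat F i) in
  projT1 X = (2 * i * Pp i j, 2 * i - 1 + j)%N /\
  good (projT2 X) (Pp i j) ((2 * i - 1) * Qp i j).
Proof.
move=> hi; elim: j => [|j IH] hj /=.
  rewrite Pp0 Qp0 muln1 addn0 muln1; split; first by congr pair; lia.
  by apply: C_good; lia.
have [e1 hg] := IH ltac:(lia).
set Y := basis_iter j (Cmat F i) in e1 hg *.
split.
  rewrite e1 /= PpS -mulnA; congr pair; [congr muln; congr muln | ]; lia.
have hk : (projT1 Y).2 = (2 * i - 1 + j)%N by rewrite e1.
case: (hg) => hn _ _ _ _.
have e2 : Pp i j.+1 = (Pp i j * (projT1 Y).2.+1)%N.
  by rewrite hk PpS; congr muln; lia.
have e3 : ((2 * i - 1) * Qp i j.+1 = (projT1 Y).2 * ((2 * i - 1) * Qp i j))%N.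
  rewrite hk QpS.
  have -> : (2 * i - 2 + j.+1 = 2 * i - 1 + j)%N by lia.
  by rewrite mulnA mulnC.
rewrite e2 e3; apply: step => //.
by rewrite hk; apply: ineq => //; lia.
Qed.

End M_P6.
Import M_P6.

Unset Implicit Arguments.
Local Open Scope ring_scope.

Theorem proposition4p5 (F : fieldType) (i : nat) (hi : (2 <= i)%N) :
  (is_code (Cbasis F i) (2 * i) (2 * i - 1) 1 /\
   bounded (Cbasis F i) (2 * i - 1))
  /\
  (forall j : nat, (1 <= j <= 4 * i ^ 2 - 6 * i + 1)%N ->
     let X := basis_iter j (Cmat F i) in
     let pj := (\prod_(1 <= l < j.+1) (2 * i - 1 + l))%N in
     is_code (projT2 X) (2 * i * pj) (2 * i - 1 + j) pj /\
     bounded (projT2 X) ((2 * i - 1) * \prod_(1 <= l < j.+1) (2 * i - 2 + l))%N).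
Proof.
split.
  have [_ _ hind hmd [hcol hsum]] := C_good F (ltac:(lia) : (0 < i)%N).
  have hr := indep_rank hind.
  split; first by split => //; rewrite hr; lia.
  split => //; exists 1%N; split => //.
  rewrite mul1n; nia.
move=> j /andP [hj1 hj2] X pj.
have [e1 [_ _ hind hmd [hcol hsum]]] := iter_good F hi hj2.
have hr := indep_rank hind.
rewrite -/X in e1 hind hmd hcol hsum hr.
have hb : (projT1 X).2 = (2 * i - 1 + j)%N by rewrite e1.
split.
  by split => //; [rewrite e1 | rewrite hr hb].
split => //; exists pj; split => //.
rewrite hb addn1; exact: ineq.
Qed.
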